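(* For every $m\ge2$, $\mathbf{E}_m=\bigvee_{r\ge1}\mathbf{M}(\mathbf{w}_{m,r})$, where $\mathbf{w}_{m,r}=x^{m-1}t_1x^{m-1}t_2x^{m-1}\cdots t_rx^{m-1}$.
   Context: All varieties are varieties of monoids (signature: associative binary operation and identity constant $1$); identities are pairs of words over a countably infinite set of variables, and variables may be substituted by $1$. $\mathbf{O}$ is the variety defined by $xyt_1xt_2y \approx yxt_1xt_2y$, $xt_1xyt_2y \approx xt_1yxt_2y$, $xt_1yt_2xy \approx xt_1yt_2yx$. For $m\ge1$, $\mathbf{E}_m$ is the subvariety of $\mathbf{O}$ defined additionally by $x^{m+1}\approx x^m$ and $x^mt\approx tx^m$. For a word $\mathbf{w}$, the factor monoid $M(\mathbf{w})$ consists of all factors (contiguous subwords, including the empty word $1$) of $\mathbf{w}$ together with a zero $0$, with product $\mathbf{u}\cdot\mathbf{v}=\mathbf{u}\mathbf{v}$ if $\mathbf{u}\mathbf{v}$ is a factor of $\mathbf{w}$ and $0$ otherwise; $\mathbf{M}(\mathbf{w})$ is the monoid variety generated by $M(\mathbf{w})$. The join $\bigvee$ is taken in the lattice of monoid varieties (the variety generated by the union). Here $x,t_1,\dots,t_r$ are distinct variables. *)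

(* Defs.v *)
From mathcomp Require Import all_boot.
Set Implicit Arguments. Unset Strict Implicit. Unset Printing Implicit Defensive.

Definition word := seq nat.
Definition identity := (word * word)%type.

Record magma := Magma { carrier : Type; mul : carrier -> carrier -> carrier; one : carrier }.

Definition is_monoid (M : magma) : Prop :=
  (forall a b c : carrier M, mul a (mul b c) = mul (mul a b) c) /\
  (forall a : carrier M, mul (one M) a = a) /\
  (forall a : carrier M, mul a (one M) = a).

(** Value of a word under an assignment of variables (the empty word gives 1;
    assigning 1 to a variable is allowed). *)
Fixpoint eval (M : magma) (s : nat -> carrier M) (u : word) : carrier M :=
  match u with
  | [::] => one M
  | x :: u' => mul (s x) (eval s u')
  end.

Definition sat (M : magma) (i : identity) : Prop :=
  forall s : nat -> carrier M, eval s i.1 = eval s i.2.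

Definition var_of (Sigma : identity -> Prop) (M : magma) : Prop :=
  is_monoid M /\ forall i, Sigma i -> sat M i.

(** The join of the varieties generated by a family [F i] (i with [P i]):
    the variety generated by the union, i.e. (Birkhoff) the class of monoids
    satisfying every identity that holds in all [F i]. *)
Definition join_var (I : Type) (P : I -> Prop) (F : I -> magma) (M : magma) : Prop :=
  is_monoid M /\
  forall i : identity, (forall j, P j -> sat (F j) i) -> sat M i.

(** Factor monoid M(w): factors of w together with a zero (None). *)
Definition isfac (w : word) (o : option word) : bool :=
  if o is Some u then infix u w else true.

Definition fac_carrier (w : word) := {o : option word | isfac w o}.

Definition fmul (w : word) (o1 o2 : option word) : option word :=
  match o1, o2 with
  | Some u, Some v => if infix (u ++ v) w then Some (u ++ v) else None
  | _, _ => None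
  end.

Lemma fmul_fac (w : word) o1 o2 : isfac w (fmul w o1 o2).
Proof.
case: o1 => [u|] //; case: o2 => [v|] //=.
by case H: (infix (u ++ v) w) => //=; rewrite H.
Qed.

Lemma one_fac (w : word) : isfac w (Some [::]).
Proof. by rewrite /= infix0s. Qed.

Definition fac_mul (w : word) (a b : fac_carrier w) : fac_carrier w :=
  exist _ (fmul w (sval a) (sval b)) (fmul_fac w (sval a) (sval b)).

Definition fac_one (w : word) : fac_carrier w := exist _ (Some [::]) (one_fac w).

Definition factor_monoid (w : word) : magma :=
  @Magma (fac_carrier w) (@fac_mul w) (fac_one w).

(** Variables: x = 0, y = 1, t = 2, t1 = 3, t2 = 4. *)
Definition O_ids (i : identity) : Prop :=
  i = ([:: 0; 1; 3; 0; 4; 1], [:: 1; 0; 3; 0; 4; 1]) \/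
  i = ([:: 0; 3; 0; 1; 4; 1], [:: 0; 3; 1; 0; 4; 1]) \/
  i = ([:: 0; 3; 1; 4; 0; 1], [:: 0; 3; 1; 4; 1; 0]).

Definition E_ids (m : nat) (i : identity) : Prop :=
  O_ids i \/
  i = (nseq m.+1 0, nseq m 0) \/
  i = (nseq m 0 ++ [:: 2], 2 :: nseq m 0).

Definition E_var (m : nat) : magma -> Prop := var_of (E_ids m).

(** w_{m,r} = x^{m-1} t_1 x^{m-1} t_2 ... t_r x^{m-1}, with x = 0, t_i = i. *)
Definition w_mr (m r : nat) : word :=
  nseq (m - 1) 0 ++ flatten [seq i :: nseq (m - 1) 0 | i <- iota 1 r].

(* Main.v *)
Require Import Defs.
From mathcomp Require Import all_boot.
From mathcomp Require Import zify.
Require Import Defs.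
Set Implicit Arguments. Unset Strict Implicit. Unset Printing Implicit Defensive.


Lemma eval_cat (M : magma) (HM : is_monoid M) (s : nat -> carrier M) (a b : word) :
  eval s (a ++ b) = mul (eval s a) (eval s b).
Proof.
case: HM => [As [Hl Hr]]; elim: a => [|c a IH] /=; first by rewrite Hl.
by rewrite IH As.
Qed.

Lemma eval_ext (M : magma) (s1 s2 : nat -> carrier M) (u : word) :
  (forall c, c \in u -> s1 c = s2 c) -> eval s1 u = eval s2 u.
Proof.
elim: u => [|c u IH] //= H; rewrite H ?mem_head // IH // => d Hd.
by apply: H; rewrite inE Hd orbT.
Qed.

Lemma eval_map (M : magma) (s : nat -> carrier M) (f : nat -> nat) (u : word) :
  eval s (map f u) = eval (fun c => s (f c)) u :> carrier M.
Proof. by elim: u => //= c u ->. Qed.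

Lemma eval_flatten (M : magma) (HM : is_monoid M) (s : nat -> carrier M) (th : nat -> word) (u : word) :
  eval s (flatten (map th u)) = eval (fun c => eval s (th c)) u.
Proof.
elim: u => [|c u IH] //=; by rewrite eval_cat // IH.
Qed.

Lemma eval_sat (M : magma) (HM : is_monoid M) (L R : word) (s : nat -> carrier M) th A D :
  sat M (L, R) ->
  eval s (A ++ flatten (map th L) ++ D) = eval s (A ++ flatten (map th R) ++ D).
Proof.
move=> H; rewrite !eval_cat // !eval_flatten //.
by rewrite (H (fun c => eval s (th c))).
Qed.

Definition Omod (M : magma) := is_monoid M /\ forall i, O_ids i -> sat M i.

Definition th4 (x y : nat) (B C : word) : nat -> word :=
  fun c => if c == 0 then [:: x] else if c == 1 then [:: y] else if c == 3 then B else C.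

Lemma swap_lem (M : magma) (HM : Omod M) (s : nat -> carrier M) (P Q : word) (x y : nat) :
  1 < count_mem x (P ++ x :: y :: Q) -> 1 < count_mem y (P ++ x :: y :: Q) ->
  eval s (P ++ x :: y :: Q) = eval s (P ++ y :: x :: Q) :> carrier M.
Proof.
case: HM => HM HO.
have I1 := HO _ (or_introl erefl).
have I2 := HO _ (or_intror (or_introl erefl)).
have I3 := HO _ (or_intror (or_intror erefl)).
have sym : forall L R, sat M (L, R) -> sat M (R, L).
  by move=> L R H s'; rewrite H.
case: (eqVneq x y) => [->//|nxy].
rewrite !count_cat /= eqxx (negbTE nxy) eq_sym (negbTE nxy) /= => cx cy.
have xPQ : (x \in P) || (x \in Q).
  rewrite -!has_pred1 !has_count; move: cx.
  by case: (count_mem x P) => [|?] //; case: (count_mem x Q).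
have yPQ : (y \in P) || (y \in Q).
  rewrite -!has_pred1 !has_count; move: cy; rewrite eqxx.
  by case: (count_mem y P) => [|?] //; case: (count_mem y Q).
have nyx : y != x by rewrite eq_sym.
case xP: (x \in P); case yP: (y \in P).
- case/splitPr: xP yP => A B.
  rewrite mem_cat inE (negbTE nyx) /= => /orP [yA|yB].
  + case/splitPr: yA => A1 A2.
    transitivity (eval s (A1 ++ flatten (map (th4 y x A2 B) [:: 0; 3; 1; 4; 1; 0]) ++ Q)).
      by rewrite /th4 /= -?catA /= ?cat_cons ?cat0s -?catA ?cat_cons ?cat0s.
    rewrite (eval_sat HM _ _ _ _ (sym _ _ I3)) //.
    by rewrite /th4 /= -?catA /= ?cat_cons ?cat0s -?catA ?cat_cons ?cat0s.
  + case/splitPr: yB => B1 B2.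
    transitivity (eval s (A ++ flatten (map (th4 x y B1 B2) [:: 0; 3; 1; 4; 0; 1]) ++ Q)).
      by rewrite /th4 /= -?catA /= ?cat_cons ?cat0s -?catA ?cat_cons ?cat0s.
    rewrite (eval_sat HM _ _ _ _ I3) //.
    by rewrite /th4 /= -?catA /= ?cat_cons ?cat0s -?catA ?cat_cons ?cat0s.
- move: yPQ; rewrite yP /= => yQ.
  case/splitPr: xP => A B; case/splitPr: yQ => C D.
  transitivity (eval s (A ++ flatten (map (th4 x y B C) [:: 0; 3; 0; 1; 4; 1]) ++ D)).
    by rewrite /th4 /= -?catA /= ?cat_cons ?cat0s -?catA ?cat_cons ?cat0s.
  rewrite (eval_sat HM _ _ _ _ I2) //.
  by rewrite /th4 /= -?catA /= ?cat_cons ?cat0s -?catA ?cat_cons ?cat0s.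
- move: xPQ; rewrite xP /= => xQ.
  case/splitPr: yP => A B; case/splitPr: xQ => C D.
  transitivity (eval s (A ++ flatten (map (th4 y x B C) [:: 0; 3; 1; 0; 4; 1]) ++ D)).
    by rewrite /th4 /= -?catA /= ?cat_cons ?cat0s -?catA ?cat_cons ?cat0s.
  rewrite (eval_sat HM _ _ _ _ (sym _ _ I2)) //.
  by rewrite /th4 /= -?catA /= ?cat_cons ?cat0s -?catA ?cat_cons ?cat0s.
- move: xPQ yPQ; rewrite xP yP /= => xQ.
  case/splitPr: xQ => C D.
  rewrite mem_cat inE (negbTE nyx) /= => /orP [yC|yD].
  + case/splitPr: yC => C1 C2.
    transitivity (eval s (P ++ flatten (map (th4 y x C1 C2) [:: 1; 0; 3; 0; 4; 1]) ++ D)).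
      by rewrite /th4 /= -?catA /= ?cat_cons ?cat0s -?catA ?cat_cons ?cat0s.
    rewrite (eval_sat HM _ _ _ _ (sym _ _ I1)) //.
    by rewrite /th4 /= -?catA /= ?cat_cons ?cat0s -?catA ?cat_cons ?cat0s.
  + case/splitPr: yD => D1 D2.
    transitivity (eval s (P ++ flatten (map (th4 x y C D1) [:: 0; 1; 3; 0; 4; 1]) ++ D2)).
      by rewrite /th4 /= -?catA /= ?cat_cons ?cat0s -?catA ?cat_cons ?cat0s.
    rewrite (eval_sat HM _ _ _ _ I1) //.
    by rewrite /th4 /= -?catA /= ?cat_cons ?cat0s -?catA ?cat_cons ?cat0s.
Qed.


Lemma move_lem (M : magma) (HM : Omod M) (s : nat -> carrier M) c R v1 : forall P,
  (forall d, d \in c :: v1 -> 1 < count_mem d (P ++ v1 ++ c :: R)) ->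
  eval s (P ++ v1 ++ c :: R) = eval s (P ++ c :: v1 ++ R).
Proof.
elim: v1 => [|d v1 IH] P H //=.
have -> : P ++ d :: v1 ++ c :: R = (P ++ [:: d]) ++ v1 ++ c :: R by rewrite -catA.
rewrite IH; last first.
  move=> e He; rewrite -catA /=; apply: H.
  by move: He; rewrite !inE => /orP [->|->]; rewrite ?orbT.
rewrite -catA /= swap_lem //.
- have := H d; rewrite !inE eqxx orbT => /(_ isT).
  by rewrite /= !count_cat /= !count_cat /=; lia.
- have := H c; rewrite !inE eqxx => /(_ isT).
  by rewrite /= !count_cat /= !count_cat /=; lia.
Qed.

Lemma cnt_filt (l : pred nat) z u :
  count_mem z (filter (predU (pred1 z) l) u) = count_mem z u.
Proof.
rewrite count_filter; apply: eq_count => c /=.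
by case: eqP => //= ->; rewrite eqxx.
Qed.

Lemma split_first (p : pred nat) (v : word) : has p v ->
  exists v1 d v2, v = v1 ++ d :: v2 /\ ~~ has p v1 /\ p d.
Proof.
elim: v => [//|e v IH] /=; case pe: (p e) => /= H.
  by exists [::], e, v.
case: (IH H) => [v1 [d [v2 [-> [nv pd]]]]].
by exists (e :: v1), d, v2; rewrite /= pe.
Qed.

Lemma GL (M : magma) (HM : Omod M) (s : nat -> carrier M) (l : pred nat) n :
  forall u v P Q, size u <= n ->
  (forall z, filter (predU (pred1 z) l) u = filter (predU (pred1 z) l) v) ->
  (forall c, c \in u -> ~~ l c -> 1 < count_mem c (P ++ u ++ Q)) ->
  eval s (P ++ u ++ Q) = eval s (P ++ v ++ Q).
Proof.
elim: n => [|n IH] u v P Q.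
  move: u => [|//] _ Hf _; case: v Hf => [//|d v] /(_ d) /=.
  by rewrite eqxx.
have cntE : forall u v, (forall z, filter (predU (pred1 z) l) u = filter (predU (pred1 z) l) v) ->
   forall z, count_mem z u = count_mem z v.
  by move=> u1 v1 Hf z; rewrite -(cnt_filt l) Hf cnt_filt.
case: u => [|c u] Hs Hf Hc.
  case: v Hf => [//|d v] /(_ d) /=.
  by rewrite eqxx.
have Hcnt := cntE _ _ Hf.
have memvu : forall d, d \in v -> d \in c :: u.
  by move=> d; rewrite -!has_pred1 !has_count Hcnt.
case lc: (l c).
-
  case: v Hf Hcnt memvu => [|d v] Hf Hcnt memvu; first by move: (Hf c) => /=; rewrite eqxx.
  have dc : d = c.
    case pd: ((d == c) || l d).
    + move: (Hf c) => /=; rewrite eqxx pd /=; by case=> ->.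
    + move: (Hf d) => /=; rewrite eqxx lc orbT /=; case=> Hcd.
      by move: pd; rewrite Hcd eqxx.
  subst d.
  have -> : P ++ (c :: u) ++ Q = (P ++ [:: c]) ++ u ++ Q by rewrite -catA.
  have -> : P ++ (c :: v) ++ Q = (P ++ [:: c]) ++ v ++ Q by rewrite -catA.
  apply: IH => //.
  + move=> z; move: (Hf z) => /=; rewrite lc orbT; by case.
  + move=> e He le; rewrite -catA; apply: Hc => //; by rewrite inE He orbT.
-
  have pc : (predU (pred1 c) l) c by rewrite /= eqxx.
  have Hfc := Hf c; rewrite /= eqxx /= in Hfc.
  set p := predU (pred1 c) l.
  have hv : has p v.
    by rewrite has_filter -Hfc.
  case: (split_first hv) => [v1 [d [v2 [Ev [nv1 pd]]]]].
  have fv1 : forall q, filter q v1 = [::] -> True by [].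
  have f1 : filter p v1 = [::].
    by apply/eqP; move: nv1; rewrite has_filter negbK.
  have dc : d = c.
    by move: Hfc; rewrite Ev filter_cat f1 /= (_ : (d == c) || l d = true) //; case.
  subst d.
  have nl1 : forall e, e \in v1 -> ~~ l e.
    move=> e He; apply/negP => le; move/hasPn: nv1 => /(_ e He).
    by rewrite /p /= le orbT.
  rewrite Ev -catA /= move_lem //; last first.
    move=> e He.
    have : e \in c :: u by apply: memvu; rewrite Ev mem_cat inE; move: He; rewrite inE => /orP [->|->]; rewrite ?orbT.
    move=> Heu.
    have le : ~~ l e.
      by move: He; rewrite inE => /orP [/eqP ->|/nl1 //]; rewrite lc.
    have := Hc e Heu le.
    by rewrite !count_cat Hcnt Ev !count_cat /= count_cat; lia.
  have -> : P ++ (c :: u) ++ Q = (P ++ [:: c]) ++ u ++ Q by rewrite -catA.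
  have -> : P ++ c :: v1 ++ v2 ++ Q = (P ++ [:: c]) ++ (v1 ++ v2) ++ Q by rewrite -!catA.
  apply: IH => //.
  + move=> z; move: (Hf z); rewrite Ev !filter_cat /=.
    case: (eqVneq c z) => [<-|nz].
    * by rewrite -/p f1 /=; case.
    * by rewrite /= lc.
  + move=> e He le; rewrite -catA; apply: Hc => //; by rewrite inE He orbT.
Qed.


Definition Emod (m : nat) (M : magma) := is_monoid M /\ forall i, E_ids m i -> sat M i.

Lemma Emod_O m M : Emod m M -> Omod M.
Proof. by case=> HM HE; split => // i Hi; apply: HE; left. Qed.

Lemma pow_red m (M : magma) (HM : Emod m M) (s : nat -> carrier M) z :
  eval s (nseq m.+1 z) = eval s (nseq m z).
Proof.
case: HM => _ HE; have := HE _ (or_intror (or_introl erefl)) (fun _ => s z) => /=.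
have E : forall k, eval (fun _ => s z) (nseq k 0) = eval s (nseq k z).
  by elim=> //= k ->.
by rewrite -!E.
Qed.

Lemma central m (M : magma) (HM : Emod m M) (s : nat -> carrier M) z a :
  mul (eval s (nseq m z)) a = mul a (eval s (nseq m z)).
Proof.
case: HM => HM HE; have := HE _ (or_intror (or_intror erefl)) (fun c => if c == 2 then a else s z).
rewrite /= eval_cat //.
have E : forall k, eval (fun c => if c == 2 then a else s z) (nseq k 0) = eval s (nseq k z).
  by elim=> //= k ->.
rewrite E /=; case: HM => _ [Hl Hr]; by rewrite !Hr.
Qed.

Lemma absorb1 m (M : magma) (HM : Emod m M) (s : nat -> carrier M) z X :
  eval s (nseq m z ++ X) = eval s (nseq m z ++ filter (predC1 z) X).
Proof.
have HM' := HM; case: HM' => HM0 _; case: (HM0) => As _.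
elim: X => [|c X IH] //=.
case: (eqVneq c z) => [->|nz] /=.
  by rewrite (_ : nseq m z ++ z :: X = nseq m.+1 z ++ X) ?eval_cat ?pow_red -?eval_cat // -addn1 nseqD -catA.
rewrite !eval_cat //=.
have K : forall Y, mul (eval s (nseq m z)) (mul (s c) (eval s Y)) = mul (s c) (eval s (nseq m z ++ Y)).
  by move=> Y; rewrite eval_cat // As central // -As.
by rewrite !K IH.
Qed.

Lemma cent2 m (M : magma) (HM : Emod m M) (s : nat -> carrier M) z A B :
  eval s (A ++ nseq m z ++ B) = eval s (nseq m z ++ A ++ B).
Proof.
have HM' := HM; case: HM' => HM0 _; case: (HM0) => As _.
by rewrite !eval_cat // As -central // -As.
Qed.

Definition capped (m : nat) (l : pred nat) (u : word) (z : nat) :=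
  ~~ l z && infix (nseq m z) (filter (predU (pred1 z) l) u).

Lemma filter_split (p : pred nat) (u A B : word) : filter p u = A ++ B ->
  exists u1 u2, [/\ u = u1 ++ u2, filter p u1 = A & filter p u2 = B].
Proof.
elim: u A => [|c u IH] A /=.
  by case: A => [|//]; case: B => [|//] _; exists [::], [::].
case pc: (p c) => H.
  case: A H => [|a A] /= H.
    by exists [::], (c :: u); rewrite /= pc H.
  case: H => <- /IH [u1 [u2 [-> H1 H2]]].
  by exists (c :: u1), u2; rewrite /= pc H1.
case: (IH _ H) => [u1 [u2 [-> H1 H2]]].
by exists (c :: u1), u2; rewrite /= pc H1.
Qed.

Lemma filter_pred1E (z : nat) (s : word) : filter (pred1 z) s = nseq (count_mem z s) z.
Proof.
elim: s => //= c s ->; case: eqP => [->|] //=.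
Qed.

Lemma cap_step m (M : magma) (HM : Emod m M) (s : nat -> carrier M) (l : pred nat) u z P :
  capped m l u z -> (forall c, c \in u -> ~~ l c -> 1 < count_mem c u) ->
  eval s (P ++ u) = eval s (P ++ nseq m z ++ filter (predC1 z) u).
Proof.
move=> /andP [lz /infixP [F1 [F2 Hf]]] Hc.
have HO := Emod_O HM.
case: (filter_split Hf) => [U1 [u' [Eu Hf1 Hf2]]].
case: (filter_split Hf2) => [S [U2 [Eu' HS HU2]]].
subst u u'.
set p := predU (pred1 z) l in HS.
have Sz : forall c, c \in S -> p c -> c = z.
  move=> c Hc' pc.
  have : c \in filter p S by rewrite mem_filter pc.
  by rewrite HS => /nseqP [].
have Sl : forall c, c \in S -> ~~ l c.
  move=> c Hc'; apply/negP => lc.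
  have := Sz c Hc'; rewrite /p /= lc orbT => /(_ isT) ez.
  by move: lz; rewrite -ez lc.
have cS : count_mem z S = m.
  by rewrite -(cnt_filt l) -/p HS count_nseq /= eqxx mul1n.
transitivity (eval s (P ++ (U1 ++ (nseq m z ++ filter (predC1 z) S) ++ U2) ++ [::])).
  rewrite -[P ++ (U1 ++ S ++ U2)]cats0 -catA.
  apply: (GL HO s (l := l) (n := size (U1 ++ S ++ U2))) => //.
  - move=> z'; rewrite !filter_cat; congr (_ ++ _); congr (_ ++ _).
    case: (eqVneq z' z) => [->|nz].
    + rewrite -/p (_ : filter p (nseq m z) = nseq m z); last first.
        by rewrite (eq_in_filter (a2 := predT)) ?filter_predT // => c /nseqP [-> _]; rewrite /p /= eqxx.
      rewrite HS -filter_predI (eq_in_filter (a2 := pred0)) ?filter_pred0 ?cats0 //.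
      move=> c Hc'; apply/negbTE/negP => /andP [pc /eqP nc].
      by apply: nc; apply: Sz.
    + rewrite (eq_in_filter (a2 := pred0) (s := nseq m z)) ?filter_pred0 ?cat0s; last first.
        by move=> c /nseqP [-> _] /=; rewrite eq_sym (negbTE nz) (negbTE lz).
      rewrite -filter_predI; apply: eq_in_filter => c Hc' /=.
      by case: eqP => [->|] //=; rewrite (negbTE (Sl _ Hc')).
  - move=> c Hc' lc; rewrite cats0 count_cat; have := Hc c Hc' lc; lia.
have HM0 : is_monoid M by case: HM.
rewrite cats0 (eval_cat HM0 _ P) (eval_cat HM0 _ P); congr mul.
rewrite -catA cent2 // absorb1 //.
by rewrite !filter_cat filter_id.
Qed.

Lemma cap_red m (M : magma) (HM : Emod m M) (s : nat -> carrier M) (l : pred nat) (Cs : seq nat) :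
  forall P u, uniq Cs -> (forall z, z \in Cs -> capped m l u z) ->
  (forall c, c \in u -> ~~ l c -> 1 < count_mem c u) ->
  eval s (P ++ u) = eval s (P ++ flatten [seq nseq m z | z <- Cs] ++ filter (fun c => c \notin Cs) u).
Proof.
elim: Cs => [|z Cs IH] P u /=.
  by move=> _ _ _; rewrite (eq_filter (a2 := predT)) ?filter_predT.
move=> /andP [zCs uCs] Hcap Hc.
have cz := Hcap z (mem_head _ _).
rewrite (cap_step HM s P cz Hc) catA IH //.
- rewrite -!catA -filter_predI; congr (eval s (_ ++ _ ++ _ ++ _)).
  by apply: eq_filter => c /=; rewrite inE negb_or andbC.
- move=> z' Hz'; have /andP [lz' Hi] : capped m l u z' by apply: Hcap; rewrite inE Hz' orbT.
  apply/andP; split => //.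
  rewrite -filter_predI (eq_filter (a2 := predU (pred1 z') l)) //.
  move=> c /=; case: eqP => [->|] /=.
    by apply/eqP => e; move: zCs; rewrite -e Hz'.
  case lc: (l c) => //= _; apply/eqP => e; move: cz; rewrite /capped -e lc.
  by [].
- move=> c; rewrite mem_filter => /andP [/= nc Hcu] lc.
  rewrite count_filter (eq_count (a2 := pred1 c)); first by apply: Hc.
  by move=> d /=; case: eqP => // ->; rewrite nc.
Qed.


Definition thf (w : word) (s : nat -> carrier (factor_monoid w)) (c : nat) : word :=
  odflt [::] (sval (s c)).

Lemma eval_fac (w : word) (s : nat -> carrier (factor_monoid w)) (u : word) :
  sval (eval s u) =
  if all (fun c => sval (s c) != None) u && infix (flatten (map (thf s) u)) w
  then Some (flatten (map (thf s) u)) else None.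
Proof.
elim: u => [|c u IH] /=; first by rewrite infix0s.
rewrite IH /thf; case: (sval (s c)) => [a|] //=.
case: (all _ u) => //=.
case H: (infix _ w) => /=; first by [].
by case H2: (infix (a ++ _) w) => //; move: H; rewrite (catl_infix H2).
Qed.

Lemma mem_nseq0 (c k : nat) : c != 0 -> count_mem c (nseq k 0) = 0.
Proof. by move=> nc; rewrite count_nseq /= eq_sym (negbTE nc). Qed.

Lemma cnt_wblk (c k : nat) (t : seq nat) : c != 0 ->
  count_mem c (flatten [seq i :: nseq k 0 | i <- t]) = count_mem c t.
Proof.
move=> nc; elim: t => //= i t IH.
by rewrite count_cat /= mem_nseq0 // IH.
Qed.

Lemma cnt_w m r c : c != 0 -> count_mem c (w_mr m r) <= 1.
Proof.
move=> nc; rewrite /w_mr count_cat mem_nseq0 // cnt_wblk //.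
by rewrite count_uniq_mem ?iota_uniq //; case: (c \in _).
Qed.

Lemma cnt_infix (c : nat) (F W : word) : infix F W -> count_mem c F <= count_mem c W.
Proof. by case/infixP => [A [B ->]]; rewrite !count_cat; lia. Qed.

Lemma prefix_cut (s A B : word) (c : nat) : c \notin s -> prefix s (A ++ c :: B) -> prefix s A.
Proof.
elim: s A => [|x s IH] A nc; first by move=> _; rewrite prefix0s.
case: A => [|a A] /=.
  by move=> /andP [/eqP e _]; move: nc; rewrite e mem_head.
move=> /andP [-> H] /=; apply: IH => //.
by move: nc; rewrite inE negb_or => /andP [].
Qed.

Lemma infix_cut (s A B : word) (c : nat) : c \notin s -> infix s (A ++ c :: B) -> infix s A || infix s B.
Proof.
move=> nc; elim: A => [|a A IH].
  rewrite cat0s infix_consl => /orP [H|->]; last by rewrite orbT.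
  by have := prefix_cut (A := [::]) nc H; rewrite prefixs0 => /eqP ->; rewrite infix0s.
rewrite cat_cons infix_consl => /orP [H|/IH /orP [H|->]]; last by rewrite orbT.
  by rewrite (prefixW (prefix_cut (A := a :: A) nc H)).
by rewrite infix_consl H orbT.
Qed.

Lemma w_mrS m r : w_mr m r.+1 = w_mr m r ++ r.+1 :: nseq (m - 1) 0.
Proof.
by rewrite /w_mr -(addn1 r) iotaD map_cat flatten_cat /= cats0 catA addnC.
Qed.

Lemma no_run m r : 0 < m -> ~~ infix (nseq m 0) (w_mr m r).
Proof.
move=> m0; elim: r => [|r IH].
  rewrite /w_mr /= cats0; apply/negP => /size_infix; rewrite !size_nseq; lia.
rewrite w_mrS; apply/negP => /infix_cut; rewrite mem_nseq (negbTE (lt0n_neq0 _)) ?andbF //.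
move=> /(_ isT) /orP [H|]; first by move: IH; rewrite H.
by move=> /size_infix; rewrite !size_nseq; lia.
Qed.

Lemma cnt_flat_nseq (c k : nat) (X : word) : count_mem c (flatten (nseq k X)) = k * count_mem c X.
Proof. by elim: k => //= k IH; rewrite count_cat IH mulSn. Qed.

Lemma flat_nseq0 (k a : nat) : flatten (nseq k (nseq a 0)) = nseq (k * a) 0.
Proof. by elim: k => //= k IH; rewrite IH mulSn nseqD. Qed.

Lemma zero_word (X : word) : (forall c, c != 0 -> count_mem c X = 0) -> X = nseq (size X) 0.
Proof.
move=> H; apply/all_pred1P/allP => c Hc /=; apply/negPn/negP => nc.
have := H c nc; have : 0 < count_mem c X by rewrite -has_count has_pred1.
by move=> h e; move: h; rewrite e.
Qed.

Lemma no_pow m r (X : word) : 1 < m -> X != [::] -> ~~ infix (flatten (nseq m X)) (w_mr m r).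
Proof.
move=> m1 nX; apply/negP => Hi.
case H: (all (pred1 0) X).
  move/all_pred1P: H => EX; move: Hi; rewrite EX flat_nseq0 => Hi.
  have : infix (nseq m 0) (nseq (m * size X) 0).
    apply: prefixW; apply/prefixP; exists (nseq (m * size X - m) 0).
    rewrite -nseqD; congr nseq.
    have : 0 < size X by case: (X) nX.
    by move=> sX; rewrite subnKC // leq_pmulr.
  move=> H2; have := no_run r (ltnW m1); by rewrite (infix_trans H2 Hi).
move/negbT: H => /allPn [c Hc /= nc].
have := cnt_w m r nc; have := cnt_infix c Hi; rewrite cnt_flat_nseq.
have : 0 < count_mem c X by rewrite -has_count has_pred1.
move=> h1 h2 h3; have := leq_trans h2 h3.
have : 2 <= m * count_mem c X by apply: leq_trans (leq_pmulr _ h1).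
lia.
Qed.

Lemma sat_fac_gen (w L R : word) :
  (forall c, (c \in L) = (c \in R)) ->
  (forall th : nat -> word, infix (flatten (map th L)) w -> flatten (map th R) = flatten (map th L)) ->
  (forall th : nat -> word, infix (flatten (map th R)) w -> flatten (map th L) = flatten (map th R)) ->
  sat (factor_monoid w) (L, R).
Proof.
move=> Hm H1 H2 s /=; apply: val_inj; rewrite /= !eval_fac.
rewrite (eq_all_r Hm).
case: (all _ R) => //=.
case HL: (infix _ w); first by rewrite H1 // HL.
case HR: (infix _ w) => //.
by move: HL; rewrite H2 // HR.
Qed.

Lemma twice_zero m r (th : nat -> word) (F : word) (x : nat) :
  infix F (w_mr m r) -> (forall c, 2 * count_mem c (th x) <= count_mem c F) ->
  th x = nseq (size (th x)) 0.
Proof.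
move=> Hi Hc; apply: zero_word => c nc.
have := cnt_w m r nc; have := cnt_infix c Hi; have := Hc c; lia.
Qed.

Lemma zero_comm (X Y : word) : X = nseq (size X) 0 -> Y = nseq (size Y) 0 -> X ++ Y = Y ++ X.
Proof. by move=> EX EY; rewrite EX EY -!nseqD addnC. Qed.

Lemma sat_O_fac m r i : O_ids i -> sat (factor_monoid (w_mr m r)) i.
Proof.
case=> [->|[->|->]]; apply: sat_fac_gen;
  try (by move=> c; rewrite !inE; repeat case: (_ == _));
  move=> th Hi;
  (have X0 : th 0 = nseq (size (th 0)) 0 by
     apply: (twice_zero Hi) => c; rewrite /= !count_cat /=; lia);
  (have X1 : th 1 = nseq (size (th 1)) 0 by
     apply: (twice_zero Hi) => c; rewrite /= !count_cat /=; lia);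
  have XY := zero_comm X0 X1; have YX := esym XY; rewrite /=.
- by rewrite !catA XY.
- by rewrite !catA YX.
- by rewrite (catA (th 0) (th 1)) XY -catA.
- by rewrite (catA (th 1) (th 0)) YX -catA.
- by rewrite (catA (th 0) (th 1)) XY -catA.
- by rewrite (catA (th 1) (th 0)) YX -catA.
Qed.

Lemma flat_nseq_nil k : flatten (nseq k ([::] : word)) = [::].
Proof. by elim: k. Qed.

Lemma sat_E_fac m r i : 1 < m -> E_ids m i -> sat (factor_monoid (w_mr m r)) i.
Proof.
move=> m1; case=> [/sat_O_fac //|[->|->]]; apply: sat_fac_gen.
- by move=> c; rewrite !mem_nseq; case: m m1 => [|[|m]].
- move=> th; rewrite !map_nseq; case: (eqVneq (th 0) [::]) => [->|nX].
    by rewrite !flat_nseq_nil.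
  rewrite /= => Hi; have := no_pow r m1 nX; by rewrite (infix_trans (suffix_infix _ _) Hi).
- move=> th; rewrite !map_nseq; case: (eqVneq (th 0) [::]) => [->|nX].
    by rewrite !flat_nseq_nil.
  by move=> Hi; have := no_pow r m1 nX; rewrite Hi.
- by move=> c; rewrite mem_cat !inE orbC.
- move=> th; rewrite map_cat flatten_cat /= !map_nseq; case: (eqVneq (th 0) [::]) => [->|nX].
    by rewrite !flat_nseq_nil cats0.
  move=> Hi; have := no_pow r m1 nX; by rewrite (infix_trans (prefix_infix _ _) Hi).
- move=> th; rewrite map_cat flatten_cat /= !map_nseq; case: (eqVneq (th 0) [::]) => [->|nX].
    by rewrite !flat_nseq_nil cats0.
  move=> Hi; have := no_pow r m1 nX; by rewrite (infix_trans (suffix_infix _ _) Hi).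
Qed.


Definition Wb (m s n : nat) : word :=
  nseq (m - 1) 0 ++ flatten [seq i :: nseq (m - 1) 0 | i <- iota s n].

Lemma k_lt_m m (z k : nat) (F : word) : ~~ infix (nseq m z) (nseq k z ++ F) -> k < m.
Proof.
move=> H; rewrite ltnNge; apply/negP => km; move/negP: H; apply.
apply: prefixW; apply/prefixP; exists (nseq (k - m) z ++ F).
by rewrite catA -nseqD subnKC.
Qed.

Lemma ex_theta m (z : nat) (l : pred nat) (F : word) : forall k s, 0 < s -> ~~ l z ->
  all (predU (pred1 z) l) F -> uniq (filter l F) -> ~~ infix (nseq m z) (nseq k z ++ F) ->
  exists th : nat -> word,
  [/\ th z = [:: 0], (forall c, c \notin F -> c != z -> th c = [::]),
      (forall c, all (fun x => (x == 0) || (s <= x)) (th c)),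
      (forall a, a \in F -> l a -> exists2 j, s <= j & forall c, count_mem j (th c) = (c == a))
    & prefix (nseq k 0 ++ flatten (map th F)) (Wb m s (count l F))].
Proof.
elim: F => [|c F IH] k s s0 lz.
  move=> _ _ H; have km := k_lt_m H.
  exists (fun c => if c == z then [:: 0] else [::]); split.
  - by rewrite eqxx.
  - by move=> c _ /negbTE ->.
  - by move=> c; case: (c == z).
  - by [].
  - rewrite /Wb /= cats0 cats0; apply/prefixP; exists (nseq (m - 1 - k) 0).
    by rewrite -nseqD subnKC //; lia.
move=> /= /andP [pc aF] uF H; have km := k_lt_m H.
case: (eqVneq c z) => [ecz|ncz].
- subst c.
  have [th [T1 T2 T3 T4 T5]] : exists th : nat -> word,
  [/\ th z = [:: 0], (forall c, c \notin F -> c != z -> th c = [::]),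
      (forall c, all (fun x => (x == 0) || (s <= x)) (th c)),
      (forall a, a \in F -> l a -> exists2 j, s <= j & forall c, count_mem j (th c) = (c == a))
    & prefix (nseq k.+1 0 ++ flatten (map th F)) (Wb m s (count l F))].
    apply: IH => //; first by move: uF; rewrite /= (negbTE lz).
    by rewrite -addn1 nseqD -catA.
  exists th; split => //.
  + by move=> c; rewrite inE negb_or => /andP [_ ?]; apply: T2.
  + move=> a; rewrite inE => /orP [/eqP ->|aF']; first by rewrite (negbTE lz).
    by apply: T4.
  + by rewrite /= (negbTE lz) add0n T1; move: T5; rewrite -addn1 nseqD -catA.
- have lc : l c by move: pc; rewrite /= (negbTE ncz).
  have cF : c \notin F.
    move: uF; rewrite /= lc /= => /andP [nc _]; apply/negP => cF'.
    by move: nc; rewrite mem_filter lc cF'.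
  have [th [T1 T2 T3 T4 T5]] : exists th : nat -> word,
  [/\ th z = [:: 0], (forall c, c \notin F -> c != z -> th c = [::]),
      (forall c, all (fun x => (x == 0) || (s.+1 <= x)) (th c)),
      (forall a, a \in F -> l a -> exists2 j, s.+1 <= j & forall c, count_mem j (th c) = (c == a))
    & prefix (nseq 0 0 ++ flatten (map th F)) (Wb m s.+1 (count l F))].
    apply: IH => //; first by move: uF; rewrite /= lc => /andP [].
    apply/negP => Hi; move/negP: H; apply; apply: (infix_trans Hi).
    by rewrite -cat_rcons; apply: suffix_infix.
  exists (fun x => if x == c then nseq (m - 1 - k) 0 ++ [:: s] else th x); split.
  + by rewrite eq_sym (negbTE ncz).
  + move=> x; rewrite inE negb_or => /andP [/negbTE -> xF] xz; exact: T2.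
  + move=> x; case: (x == c).
      rewrite all_cat; apply/andP; split; last by rewrite /= leqnn orbT.
      by apply/allP => y /nseqP [-> _].
    by apply/allP => y /(allP (T3 x)) /orP [->|/ltnW ->]; rewrite ?orbT.
  + move=> a; rewrite inE => /orP [/eqP ->|aF1] la.
      exists s => // x; case: (eqVneq x c) => [_|nxc].
        by rewrite count_cat mem_nseq0 ?lt0n_neq0 //= eqxx.
      apply/eqP; rewrite eqn0Ngt -has_count has_pred1; apply/negP => Hs.
      by have := allP (T3 x) _ Hs; rewrite (gtn_eqF s0) ltnn.
    have [j sj Hj] := T4 a aF1 la.
    exists j; first exact: ltnW.
    move=> x; case: (eqVneq x c) => [->|nxc]; last by rewrite Hj.
    rewrite count_cat mem_nseq0 ?lt0n_neq0 //=; last exact: leq_trans sj.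
    have -> : (c == a) = false by apply/negbTE/negP => /eqP e; move: cF; rewrite e aF1.
    by rewrite eq_sym (gtn_eqF sj).
  + rewrite /= lc (_ : [seq (if x == c then nseq (m - 1 - k) 0 ++ [:: s] else th x) | x <- F] = map th F); last first.
      by apply/eq_in_map => x xF; case: eqP => // e; move: cF; rewrite -e xF.
    have -> : Wb m s (true + count l F) = nseq (m - 1) 0 ++ s :: Wb m s.+1 (count l F).
      by rewrite /Wb add1n /=.
    move/prefixP: T5 => [t Ht]; apply/prefixP; exists t.
    rewrite Ht /= eqxx -!catA catA -nseqD subnKC; last by lia.
    by [].
Qed.


Lemma catsI' (s a b : word) : s ++ a = s ++ b -> a = b.
Proof. by elim: s => //= x s IH [] /IH. Qed.

Lemma cut_eq (j : nat) (A1 J B1 A2 B2 : word) : j \notin A1 -> j \notin A2 -> j \in J ->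
  A1 ++ J ++ B1 = A2 ++ J ++ B2 -> A1 = A2.
Proof.
move=> n1 n2 jJ E.
have : index j (A1 ++ J ++ B1) = index j (A2 ++ J ++ B2) by rewrite E.
rewrite !index_cat (negbTE n1) (negbTE n2) jJ => /eqP; rewrite eqn_add2r => /eqP Hs.
by rewrite -(take_size_cat (J ++ B1) (erefl (size A1))) E take_size_cat.
Qed.

Lemma cnt_marker (th : nat -> word) (j a : nat) (x : word) :
  (forall c, count_mem j (th c) = (c == a)) ->
  count_mem j (flatten (map th x)) = count_mem a x.
Proof. by move=> H; elim: x => //= c x IH; rewrite count_cat H IH. Qed.

Lemma split_last (l : pred nat) (u : word) : has l u ->
  exists u1 a u2, [/\ u = u1 ++ a :: u2, l a & ~~ has l u2].
Proof.
elim: u => [//|c u IH] /=; case hu: (has l u) => /=.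
  case: (IH hu) => [u1 [a [u2 [-> la nu2]]]] _.
  by exists (c :: u1), a, u2.
by rewrite orbF => lc; exists [::], c, u; rewrite hu.
Qed.

Lemma lfree_th (z : nat) (l : pred nat) (th : nat -> word) (x : word) :
  th z = [:: 0] -> (forall c, c != z -> ~~ l c -> th c = [::]) -> ~~ has l x ->
  flatten (map th x) = nseq (count_mem z x) 0.
Proof.
move=> Tz Tc; elim: x => //= c x IH; rewrite negb_or => /andP [lc hx].
case: (eqVneq c z) => [->|nz]; first by rewrite Tz IH // eqxx.
by rewrite Tc // IH // eq_sym (negbTE nz).
Qed.

Lemma lfree_filt (z : nat) (l : pred nat) (x : word) : ~~ has l x ->
  filter (predU (pred1 z) l) x = nseq (count_mem z x) z.
Proof.
move=> hx; rewrite -filter_pred1E; apply: eq_in_filter => c cx /=.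
by have := hasPn hx c cx => /negbTE ->; rewrite orbF.
Qed.

Lemma FE (z : nat) (l : pred nat) (th : nat -> word) :
  th z = [:: 0] -> ~~ l z -> (forall c, c != z -> ~~ l c -> th c = [::]) ->
  forall n u v, size u <= n ->
  (forall a, l a -> a \in u -> exists2 j, j != 0 & forall c, count_mem j (th c) = (c == a)) ->
  (forall a, l a -> a \in u -> count_mem a u = 1) ->
  (forall a, l a -> a \in v -> a \in u) ->
  flatten (map th u) = flatten (map th v) ->
  filter (predU (pred1 z) l) u = filter (predU (pred1 z) l) v.
Proof.
move=> Tz lz Tc; elim=> [|n IH] u v su G3 H1 H1' Eth.
  have hv : ~~ has l v.
    by apply/hasPn => b bv; apply/negP => lb; move: (H1' b lb bv); case: (u) su.
  move: su Eth; case: u G3 H1 H1' => // _ _ H1' _; rewrite (lfree_th Tz Tc hv) (lfree_filt _ hv).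
  by case: (count_mem z v).
case hu: (has l u); last first.
  have hv : ~~ has l v.
    apply/hasPn => b bv; apply/negP => lb; move/negbT/hasPn: hu => /(_ b (H1' b lb bv)).
    by rewrite lb.
  move/negbT: hu => hu.
  move: Eth; rewrite (lfree_th Tz Tc hu) (lfree_th Tz Tc hv) (lfree_filt _ hu) (lfree_filt _ hv).
  by move=> E; have := congr1 size E; rewrite !size_nseq => ->.
case: (split_last hu) => [u1 [a [u2 [Eu la hu2]]]].
have au : a \in u by rewrite Eu mem_cat mem_head orbT.
case: (G3 a la au) => j j0 Hj.
have cau := H1 a la au.
have cav : count_mem a v = 1 by rewrite -(cnt_marker _ Hj) -Eth (cnt_marker _ Hj).
have av : a \in v by rewrite -has_pred1 has_count cav.
case/splitPr: av Eth cav H1' => v1 v2 Eth cav H1'.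
move: cau; rewrite Eu !count_cat /= eqxx /= => cau.
move: cav; rewrite !count_cat /= eqxx /= => cav.
have au1 : count_mem a u1 = 0 by move: cau; case: (count_mem a u1) => //= k; lia.
have av1 : count_mem a v1 = 0 by move: cav; case: (count_mem a v1) => //= k; lia.
have Eth1 : flatten (map th u1) = flatten (map th v1).
  apply: (cut_eq (j := j) (J := th a) (B1 := flatten (map th u2)) (B2 := flatten (map th v2))).
  - by rewrite -has_pred1 has_count (cnt_marker _ Hj) au1.
  - by rewrite -has_pred1 has_count (cnt_marker _ Hj) av1.
  - by rewrite -has_pred1 has_count Hj eqxx.
  - by move: Eth; rewrite Eu !map_cat !flatten_cat.
have Eth2 : flatten (map th u2) = flatten (map th v2).
  by move: Eth; rewrite Eu !map_cat !flatten_cat Eth1 /= => /catsI' /catsI'.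
have memc : forall b (x : word), (b \in x) = (0 < count_mem b x).
  by move=> b x; rewrite -has_pred1 has_count.
have Hb : forall b, l b -> b \in u -> exists2 jb, jb != 0 & count_mem b u1 = count_mem b v1 /\ count_mem b u = count_mem b (v1 ++ a :: v2).
  move=> b lb bu; case: (G3 b lb bu) => jb jb0 Hjb; exists jb => //; split.
    by rewrite -(cnt_marker _ Hjb) Eth1 (cnt_marker _ Hjb).
  by rewrite -(cnt_marker _ Hjb) Eth (cnt_marker _ Hjb).
have au2 : a \notin u2.
  by rewrite memc -leqNgt; move: cau; case: (count_mem a u2) => //= k; lia.
have av2 : a \notin v2.
  by rewrite memc -leqNgt; move: cav; case: (count_mem a v2) => //= k; lia.
have au1' : a \notin u1 by rewrite memc au1.
have hv2 : ~~ has l v2.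
  apply/hasPn => b bv2; apply/negP => lb.
  have bu : b \in u by apply: H1' => //; rewrite mem_cat inE bv2 !orbT.
  have ba : b != a by apply/eqP => e; move: av2; rewrite -e bv2.
  have bu1 : b \in u1.
    move: bu; rewrite Eu mem_cat inE (negbTE ba) /= => /orP [//|bu2].
    by move/hasPn: hu2 => /(_ b bu2); rewrite lb.
  case: (Hb b lb bu) => jb _ [E1 E2].
  have := H1 b lb bu; rewrite E2 !count_cat /=.
  move: bu1 bv2; rewrite !memc E1.
  case: (count_mem b v1) => // k _; case: (count_mem b v2) => // k' _.
  by rewrite addSn addnC addnS.
have cz2 : count_mem z u2 = count_mem z v2.
  by move: Eth2; rewrite (lfree_th Tz Tc hu2) (lfree_th Tz Tc hv2) => /(congr1 size); rewrite !size_nseq.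
have IH1 : filter (predU (pred1 z) l) u1 = filter (predU (pred1 z) l) v1.
  apply: IH => //.
  - move: su; rewrite Eu size_cat /=; lia.
  - by move=> b lb bu1; apply: G3 => //; rewrite Eu mem_cat bu1.
  - move=> b lb bu1.
    have bu : b \in u by rewrite Eu mem_cat bu1.
    have := H1 b lb bu; rewrite Eu !count_cat /=.
    have ba : b != a by apply/eqP => e; move: au1'; rewrite -e bu1.
    have -> : count_mem b u2 = 0.
      apply/eqP; rewrite eqn0Ngt -memc; apply/negP => bu2.
      by move/hasPn: hu2 => /(_ b bu2); rewrite lb.
    by rewrite eq_sym (negbTE ba) /= !addn0.
  - move=> b lb bv1.
    have bu : b \in u by apply: H1'; rewrite // mem_cat bv1.
    by case: (Hb b lb bu) => jb _ [E1 _]; rewrite memc E1 -memc.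
rewrite !filter_cat IH1 /= la orbT (lfree_filt _ hu2) (lfree_filt _ hv2) cz2.
by [].
Qed.


Definition linw (u : word) : pred nat := fun c => count_mem c u == 1.

Lemma flat_filter (p : pred nat) (th : nat -> word) (u : word) :
  (forall c, ~~ p c -> th c = [::]) -> flatten (map th u) = flatten (map th (filter p u)).
Proof.
move=> H; elim: u => //= c u IH; case pc: (p c) => /=; rewrite IH //.
by rewrite H // pc.
Qed.

Lemma infix_flat (th : nat -> word) (x : word) c : c \in x -> infix (th c) (flatten (map th x)).
Proof.
by case/splitPr => A B; rewrite map_cat flatten_cat /= infix_infix.
Qed.

Lemma L2 m (m1 : 1 < m) (u v : word)
  (HS : forall r, 0 < r -> sat (factor_monoid (w_mr m r)) (u, v)) (z : nat) :
  ~~ linw u z -> ~~ infix (nseq m z) (filter (predU (pred1 z) (linw u)) u) ->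
  filter (predU (pred1 z) (linw u)) u = filter (predU (pred1 z) (linw u)) v.
Proof.
set l := linw u; set p := predU (pred1 z) l; set F := filter p u => lz Hinf.
have fl : filter l F = filter l u.
  rewrite /F -filter_predI; apply: eq_filter => c /=; rewrite /p /=.
  by case: (l c); rewrite ?andbF ?andbT ?orbT.
have uF : uniq (filter l F).
  rewrite fl; apply: count_mem_uniq => x; rewrite count_filter mem_filter.
  case lx: (l x) => /=.
    have : count_mem x u = 1 by apply/eqP.
    have -> : count (predI (pred1 x) l) u = count_mem x u.
      by apply: eq_count => y /=; case: eqP => // ->; rewrite lx.
    by move=> H; rewrite H -has_pred1 has_count H.
  by rewrite (eq_count (a2 := pred0)) ?count_pred0 // => y /=; case: eqP => // ->; rewrite lx.
have [th [T1 T2 T3 T4 T5]] := ex_theta (F := F) (k := 0) (s := 1) (l := l) (z := z) (m := m)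
  (ltn0Sn 0) lz (filter_all _ _) uF Hinf.
set r := (count l F).+1; set w := w_mr m r.
have Fw : infix (flatten (map th F)) w.
  apply: prefixW; apply: (prefix_trans T5); rewrite /w /r w_mrS.
  exact: (prefix_catl _ (prefix_refl (Wb m 1 (count l F)))).
have Tc : forall c, c != z -> ~~ l c -> th c = [::].
  move=> c cz lc; apply: T2 => //; rewrite /F mem_filter /p /= (negbTE cz) (negbTE lc).
  by [].
have thw : forall c, infix (th c) w.
  move=> c; case cF: (c \in F); first exact: infix_trans (infix_flat th cF) Fw.
  case: (eqVneq c z) => [->|cz]; last by rewrite T2 ?cF // infix0s.
  rewrite T1 infix1s /w /w_mr mem_cat; apply/orP; left.
  by rewrite mem_nseq; apply/andP; split => //; lia.
pose s := fun c => insubd (fac_one w) (Some (th c)) : carrier (factor_monoid w).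
have sv : forall c, sval (s c) = Some (th c).
  by move=> c; rewrite /s val_insubd /= thw.
have Hv := congr1 sval (HS r (ltn0Sn _) s).
move: Hv; rewrite /= !eval_fac.
have thf_th : forall x : word, map (thf s) x = map th x.
  by move=> x; apply: eq_map => c; rewrite /thf sv.
have allS : forall x : word, all (fun c => sval (s c) != None) x.
  by move=> x; apply/allP => c _; rewrite sv.
rewrite !thf_th !allS /=.
have Fu : flatten (map th u) = flatten (map th F).
  apply: flat_filter => c; rewrite /p /= negb_or => /andP [cz lc]; exact: Tc.
rewrite Fu Fw.
case: (infix _ w) => // [[Ev]].
apply: (FE T1 lz Tc (n := size u)) => //.
- move=> a la au; have aF : a \in F by rewrite /F mem_filter /p /= la orbT.
  by case: (T4 a aF la) => j j1 Hj; exists j => //; rewrite -lt0n.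
- by move=> a la _; apply/eqP.
- by move=> a la _; rewrite -has_pred1 has_count (eqP la).
- by rewrite Fu.
Qed.


Lemma leq_sumn_mem (c : nat) (s : seq nat) : c \in s -> c <= sumn s.
Proof.
elim: s => //= x s IH; rewrite inE => /orP [/eqP ->|/IH]; first exact: leq_addr.
by move=> h; apply: leq_trans h (leq_addl _ _).
Qed.

Lemma cnt_filter_in (p : pred nat) (c : nat) (x : word) : p c ->
  count_mem c (filter p x) = count_mem c x.
Proof.
move=> pc; rewrite count_filter; apply: eq_count => d /=.
by case: eqP => // ->; rewrite pc.
Qed.

Lemma dirB m (m1 : 1 < m) (M : magma) (HE : Emod m M) (u v : word)
  (HS : forall r, 0 < r -> sat (factor_monoid (w_mr m r)) (u, v)) :
  sat M (u, v).
Proof.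
have HS' : forall r, 0 < r -> sat (factor_monoid (w_mr m r)) (v, u).
  by move=> r r0 s; rewrite (HS r r0 s).
have HO := Emod_O HE.
set l := linw u.
set z0 := (sumn (u ++ v)).+1.
have z0u : z0 \notin u.
  apply/negP => /(leq_sumn_mem) h; move: h; rewrite /z0 sumn_cat; lia.
have z0v : z0 \notin v.
  apply/negP => /(leq_sumn_mem) h; move: h; rewrite /z0 sumn_cat; lia.
have uncap0 : forall x : word, z0 \notin x -> forall (l' : pred nat), ~~ infix (nseq m z0) (filter (predU (pred1 z0) l') x).
  move=> x zx l'; apply/negP => /mem_infix /(_ z0); rewrite mem_nseq mem_filter.
  have -> : 0 < m by lia.
  by rewrite eqxx (negbTE zx) andbF => /(_ isT).
have lz0 : forall x : word, z0 \notin x -> ~~ linw x z0.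
  by move=> x zx; rewrite /linw -has_pred1 has_count in zx *; move: zx; case: (count_mem z0 x).
have F0 := L2 m1 HS (lz0 _ z0u) (uncap0 _ z0u _).
have F0' := L2 m1 HS' (lz0 _ z0v) (uncap0 _ z0v _).
have K1 : forall c, linw u c = linw v c.
  move=> c; apply/idP/idP => lc.
    have pc : predU (pred1 z0) (linw u) c by rewrite /= lc orbT.
    by move: lc; rewrite /linw -(cnt_filter_in u pc) F0 cnt_filter_in.
  have pc : predU (pred1 z0) (linw v) c by rewrite /= lc orbT.
  by move: lc; rewrite /linw -(cnt_filter_in v pc) F0' cnt_filter_in.
have PE : forall z x, filter (predU (pred1 z) (linw v)) x = filter (predU (pred1 z) l) x.
  by move=> z x; apply: eq_filter => c /=; rewrite /l K1.
have fl : filter l u = filter l v.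
  have E1 : forall x : word, z0 \notin x -> filter (predU (pred1 z0) l) x = filter l x.
    move=> x zx; apply: eq_in_filter => c cx /=.
    by case: eqP => // e; move: zx; rewrite -e cx.
  by rewrite -(E1 u z0u) -(E1 v z0v).
have FZ : forall z, ~~ l z -> ~~ infix (nseq m z) (filter (predU (pred1 z) l) u) ->
    filter (predU (pred1 z) l) u = filter (predU (pred1 z) l) v.
  by move=> z; apply: L2.
have K2 : forall z, capped m l u z -> capped m l v z.
  move=> z /andP [lz Hi]; apply/andP; split => //.
  apply/negPn/negP => Hn.
  have lvz : ~~ linw v z by rewrite -K1.
  have := L2 m1 HS' lvz; rewrite !PE => /(_ Hn) E.
  by move: Hn; rewrite E Hi.
set Cs := undup [seq z <- u | capped m l u z].
have uCs : uniq Cs by apply: undup_uniq.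
have Csc : forall z, z \in Cs -> capped m l u z.
  by move=> z; rewrite mem_undup mem_filter => /andP [].
have Csl : forall c, c \in Cs -> ~~ l c by move=> c /Csc /andP [].
have cu : forall c, c \in u -> ~~ l c -> 1 < count_mem c u.
  move=> c cu lc; move: lc; rewrite /l /linw; move: cu; rewrite -has_pred1 has_count.
  by case: (count_mem c u) => [|[|k]].
have cv : forall c, c \in v -> ~~ l c -> 1 < count_mem c v.
  move=> c cv lc; move: lc; rewrite /l K1 /linw; move: cv; rewrite -has_pred1 has_count.
  by case: (count_mem c v) => [|[|k]].
move=> s /=.
have HM : is_monoid M by case: HE.
rewrite -[u]cat0s -[v]cat0s.
rewrite (cap_red HE s [::] (u := u) uCs Csc cu).
rewrite (cap_red HE s [::] (u := v) uCs (fun z zc => K2 z (Csc z zc)) cv).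
rewrite /= -[filter _ u]cats0 -[filter _ v]cats0.
apply: (GL HO s (l := l) (n := size (filter (fun c => c \notin Cs) u))) => //.
- move=> z; rewrite -!filter_predI.
  case zC: (z \in Cs).
    have E : forall x : word, filter (predI (predU (pred1 z) l) (fun c => c \notin Cs)) x = filter l x.
      move=> x; apply: eq_filter => c /=.
      case: eqP => [->|_] /=; first by rewrite zC (negbTE (Csl z zC)).
      by case lc: (l c) => //=; apply/negP => /Csl; rewrite lc.
    by rewrite !E.
  have E : forall x : word, filter (predI (predU (pred1 z) l) (fun c => c \notin Cs)) x = filter (predU (pred1 z) l) x.
    move=> x; apply: eq_filter => c /=.
    case: eqP => [->|_] /=; first by rewrite zC.
    by case lc: (l c) => //=; apply/negP => /Csl; rewrite lc.
  rewrite !E.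
  case lz: (l z).
    have E2 : forall x : word, filter (predU (pred1 z) l) x = filter l x.
      by move=> x; apply: eq_filter => c /=; case: eqP => // ->; rewrite lz.
    by rewrite !E2.
  apply: FZ; first by rewrite lz.
  apply/negP => Hi.
  have zu : z \in u.
    have : z \in nseq m z by rewrite mem_nseq eqxx andbT; lia.
    by move/(mem_infix Hi); rewrite mem_filter => /andP [].
  move/negbT: zC; rewrite mem_undup mem_filter zu andbT /capped lz Hi.
  by [].
- move=> c; rewrite mem_filter => /andP [cC cu'] lc.
  rewrite !count_cat /= cnt_filter_in //.
  by have := cu c cu' lc; lia.
Qed.


Theorem lemma5p2 (m : nat) : 2 <= m ->
  forall M : magma,
    E_var m M <-> join_var (fun r : nat => 1 <= r) (fun r => factor_monoid (w_mr m r)) M.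
Proof.
move=> m1 M; split.
- move=> HE; split; first by case: HE.
  by move=> [u v] HS; apply: (dirB m1 HE) => r r0; apply: HS.
- move=> [HM HJ]; split => // i Hi; apply: HJ => j _; exact: sat_E_fac.
Qed.
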